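(* Let $\theta\in[0,\pi)\setminus\{\pi/2\}$, $\kappa(\theta):=\gamma-\log2+\tan\theta$, and for $t\ge0$ define $$K_\theta(t):=\lim_{R\to\infty}\frac{1}{2\pi i}\int_{-iR}^{iR}e^{t\zeta}\big(\log\sqrt\zeta+\kappa(\theta)\big)^{-1}d\zeta$$ (integral along the imaginary axis). Then there is a bounded function $K^1_\theta\in C^\infty([0,\infty))$ such that for $t>0$ $$K_\theta(t)=-\frac1\pi\,\mathrm{Im}\left\{\int_1^\infty e^{-ty}\big(\log\sqrt y+i\pi/2+\kappa(\theta)\big)^{-1}dy\right\}+K^1_\theta(t)=2\int_1^\infty\frac{e^{-ty}}{(\log y+2\kappa(\theta))^2+\pi^2}\,dy+K^1_\theta(t).$$
   Context: $\gamma$ is the Euler–Mascheroni constant; $\sqrt\zeta$ and $\log\zeta$ denote the principal branches on $\mathbb C\setminus(-\infty,0]$, extended to the imaginary axis by continuity away from $0$ (at $\zeta=0$ the integrand is interpreted as its limit $0$). *)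

(* Defs.v *)
From Stdlib Require Import Reals.
Open Scope R_scope.

Definition kappa (gam theta : R) : R := gam - ln 2 + tan theta.

Definition sgn (y : R) : R :=
  if Rlt_dec 0 y then 1 else if Rlt_dec y 0 then -1 else 0.

(* On zeta = i y (y <> 0): log sqrt(i y) = (1/2) ln|y| + i (pi/4) sgn y.
   The contour integral (1/(2 pi i)) int_{-iR}^{iR} e^{t zeta} (log sqrt zeta + kappa)^{-1} dzeta
   equals (1/(2 pi)) int_{-R}^{R} e^{i t y} (a(y) + i b(y))^{-1} dy
   with a = (1/2) ln|y| + kappa, b = (pi/4) sgn y.
   Real and imaginary parts of the integrand; value 0 at y = 0 (the limit). *)
Definition Kint_re (kap t y : R) : R :=
  if Req_EM_T y 0 then 0 else
  let a := / 2 * ln (Rabs y) + kap in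
  let b := PI / 4 * sgn y in
  (cos (t * y) * a + sin (t * y) * b) / (a ^ 2 + b ^ 2).

Definition Kint_im (kap t y : R) : R :=
  if Req_EM_T y 0 then 0 else
  let a := / 2 * ln (Rabs y) + kap in
  let b := PI / 4 * sgn y in
  (sin (t * y) * a - cos (t * y) * b) / (a ^ 2 + b ^ 2).

Definition sym_improper_int (f : R -> R) (L : R) : Prop :=
  (forall Rr, 0 <= Rr -> inhabited (Riemann_integrable f (- Rr) Rr)) /\
  (forall eps, 0 < eps -> exists M, forall Rr (pr : Riemann_integrable f (- Rr) Rr),
      M <= Rr -> Rabs (RiemannInt pr - L) < eps).

Definition improper_int_from1 (f : R -> R) (L : R) : Prop :=
  (forall b, 1 <= b -> inhabited (Riemann_integrable f 1 b)) /\
  (forall eps, 0 < eps -> exists M, forall b (pr : Riemann_integrable f 1 b),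
      M <= b -> Rabs (RiemannInt pr - L) < eps).

Definition Cinv_im (x y : R) : R := - y / (x ^ 2 + y ^ 2).

Definition bounded_on_nonneg (f : R -> R) : Prop :=
  exists M, forall t, 0 <= t -> Rabs (f t) <= M.

Definition smooth_on_nonneg (f : R -> R) : Prop :=
  exists D : nat -> R -> R,
    (forall x, 0 <= x -> D O x = f x) /\
    forall n,
      (forall x, 0 < x -> derivable_pt_lim (D n) x (D (S n) x)) /\
      (forall eps, 0 < eps -> exists del, 0 < del /\ forall h, 0 < h < del ->
         Rabs ((D n h - D n 0) / h - D (S n) 0) < eps).

(* Main.v *)
Require Import Defs.
From Coquelicot Require Import Coquelicot.
From Stdlib Require Import Reals Lra.
Open Scope R_scope.
Definition P2 := (R * R)%type.
Lemma c2_mult (f g : R*R -> R) p : continuous f p -> continuous g p -> continuous (fun q => f q * g q) p.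
Proof. intros; apply (continuous_mult f g); auto. Qed.
Lemma c2_plus (f g : R*R -> R) p : continuous f p -> continuous g p -> continuous (fun q => f q + g q) p.
Proof. intros; apply (continuous_plus f g); auto. Qed.
Lemma c2_opp (f : R*R -> R) p : continuous f p -> continuous (fun q => - f q) p.
Proof. intros; apply (continuous_opp f); auto. Qed.
Lemma c2_minus (f g : R*R -> R) p : continuous f p -> continuous g p -> continuous (fun q => f q - g q) p.
Proof. intros; apply c2_plus; auto. apply c2_opp; auto. Qed.
Lemma c2_comp (f : R*R -> R) (h : R -> R) p : continuous f p -> continuous h (f p) -> continuous (fun q => h (f q)) p.
Proof. intros; apply (continuous_comp f h); auto. Qed.
Lemma c2_inv (f : R*R -> R) p : continuous f p -> f p <> 0 -> continuous (fun q => / f q) p.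
Proof. intros; apply (c2_comp f Rinv); auto. apply continuity_pt_filterlim. apply continuity_pt_inv; auto. apply continuity_pt_id. Qed.
Lemma c2_div (f g : R*R -> R) p : continuous f p -> continuous g p -> g p <> 0 -> continuous (fun q => f q / g q) p.
Proof. intros; apply c2_mult; auto. apply c2_inv; auto. Qed.
Lemma c2_pow (f : R*R -> R) n p : continuous f p -> continuous (fun q => f q ^ n) p.
Proof. intros; induction n; simpl. apply continuous_const. apply c2_mult; auto. Qed.
Lemma c2_fst p : continuous (fun q : R*R => fst q) p.
Proof. destruct p; apply continuous_fst. Qed.
Lemma c2_snd p : continuous (fun q : R*R => snd q) p.
Proof. destruct p; apply continuous_snd. Qed.
Lemma c2_const (c : R) p : continuous (fun q : R*R => c) p.
Proof. apply continuous_const. Qed.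
Lemma c1_sin x : continuous sin x.
Proof. apply continuity_pt_filterlim. apply continuity_sin. Qed.
Lemma c1_cos x : continuous cos x.
Proof. apply continuity_pt_filterlim. apply continuity_cos. Qed.
Lemma c1_exp x : continuous exp x.
Proof. apply continuity_pt_filterlim. apply derivable_continuous_pt. apply derivable_pt_exp. Qed.

Ltac cont2 :=
  match goal with
  | |- continuous (fun q => @?f q * @?g q) _ => apply (c2_mult f g); cont2
  | |- continuous (fun q => @?f q / @?g q) _ => apply (c2_div f g); [cont2|cont2|]
  | |- continuous (fun q => @?f q + @?g q) _ => apply (c2_plus f g); cont2
  | |- continuous (fun q => @?f q - @?g q) _ => apply (c2_minus f g); cont2
  | |- continuous (fun q => - @?f q) _ => apply (c2_opp f); cont2
  | |- continuous (fun q => / @?f q) _ => apply (c2_inv f); [cont2|]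
  | |- continuous (fun q => @?f q ^ ?n) _ => apply (c2_pow f n); cont2
  | |- continuous (fun q => sin (@?f q)) _ => apply (c2_comp f sin); [cont2| apply c1_sin]
  | |- continuous (fun q => cos (@?f q)) _ => apply (c2_comp f cos); [cont2| apply c1_cos]
  | |- continuous (fun q => exp (@?f q)) _ => apply (c2_comp f exp); [cont2| apply c1_exp]
  | |- continuous (fun q => ln (@?f q)) _ => apply (c2_comp f ln); [cont2| apply continuous_ln]
  | |- continuous (fun q => fst q) _ => apply c2_fst
  | |- continuous (fun q => snd q) _ => apply c2_snd
  | |- continuous (fun q => _) _ => apply c2_const
  | _ => idtac
  end.

Definition gU (k r : R) := /2 * ln r + k.
Definition gre (k t p r : R) := exp (t*r*cos p) * (gU k r * cos (t*r*sin p + p) + p/2 * sin (t*r*sin p + p)) / (gU k r ^ 2 + (p/2)^2).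
Definition gim (k t p r : R) := exp (t*r*cos p) * (gU k r * sin (t*r*sin p + p) - p/2 * cos (t*r*sin p + p)) / (gU k r ^ 2 + (p/2)^2).
Definition gD (k t p r : R) :=
  exp (t*r*cos p) * ( - (t*r*sin p) * (gU k r * sin (t*r*sin p + p) - p/2 * cos (t*r*sin p + p))
     + (gU k r * cos (t*r*sin p + p) + p/2 * sin (t*r*sin p + p)) * (t*r*cos p + 1)
     - cos (t*r*sin p + p) / 2) / (gU k r ^ 2 + (p/2)^2)
  - exp (t*r*cos p) * (p/2) * (gU k r * sin (t*r*sin p + p) - p/2 * cos (t*r*sin p + p)) / (gU k r ^ 2 + (p/2)^2)^2.

Lemma N_pos k r p : 0 < p -> 0 < gU k r ^ 2 + (p/2)^2.
Proof. intros. nra. Qed.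

Lemma der_p k t p r : 0 < p -> is_derive (fun z => gim k t z r) p (gD k t p r).
Proof.
  intros Hp. pose proof (N_pos k r p Hp). unfold gim, gD, gU. auto_derive.
  - unfold gU in H. lra.
  - field. unfold gU in H; lra.
Qed.

Lemma der_r k t p r : 0 < p -> 0 < r -> is_derive (fun z => z * gre k t p z) r (gD k t p r).
Proof.
  intros Hp Hr. pose proof (N_pos k r p Hp). unfold gre, gD, gU. auto_derive.
  - unfold gU in H. repeat split; lra.
  - field. unfold gU in H; lra.
Qed.

Lemma gD_cont k t p r : 0 < p -> 0 < r -> continuous (fun q : R*R => gD k t (fst q) (snd q)) (p, r).
Proof.
  intros Hp Hr. assert (HN: 0 < (/ 2 * ln r + k) * ((/ 2 * ln r + k) * 1) + p / 2 * (p / 2 * 1)) by (set (x := / 2 * ln r + k); nra).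
  unfold gD, gU. cont2; simpl; try lra.
  apply Rmult_integral_contrapositive_currified; lra.
Qed.

Lemma gD_cont_r k t p r : 0 < p -> 0 < r -> continuous (fun r => gD k t p r) r.
Proof.
  intros Hp Hr.
  apply (continuous_comp_2 (fun _ => p) (fun r => r) (gD k t)).
  apply continuous_const. apply continuous_id. apply gD_cont; auto.
Qed.

Lemma gim_cont_r k t p r : 0 < p -> 0 < r -> continuous (fun r => gim k t p r) r.
Proof.
  intros Hp Hr. pose proof (N_pos k r p Hp). apply (ex_derive_continuous (fun r => gim k t p r)).
  unfold gim, gU in *. auto_derive. repeat split; lra.
Qed.

Lemma gre_cont_p k t p r : 0 < p -> continuous (fun p => gre k t p r) p.
Proof.
  intros Hp. pose proof (N_pos k r p Hp). apply (ex_derive_continuous (fun p => gre k t p r)).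
  unfold gre, gU in *. auto_derive. lra.
Qed.

Lemma locally_pos (p : R) : 0 < p -> locally p (fun x => 0 < x).
Proof. intros Hp. apply (open_gt 0 p Hp). Qed.

Lemma Phi_derive k t eps Rr p : 0 < eps < Rr -> 0 < p ->
  is_derive (fun p => RInt (fun r => gim k t p r) eps Rr) p (Rr * gre k t p Rr - eps * gre k t p eps).
Proof.
  intros He Hp.
  assert (E : Rr * gre k t p Rr - eps * gre k t p eps = RInt (fun r => Derive (fun u => gim k t u r) p) eps Rr).
  { rewrite (RInt_ext _ (gD k t p)).
    2:{ intros x Hx. rewrite Rmin_left in Hx by lra. rewrite Rmax_right in Hx by lra.
        apply is_derive_unique. apply der_p; auto. }
    symmetry. apply is_RInt_unique.
    apply (is_RInt_derive (fun r => r * gre k t p r) (gD k t p)).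
    - intros x Hx. rewrite Rmin_left in Hx by lra. rewrite Rmax_right in Hx by lra.
      apply der_r; lra.
    - intros x Hx. rewrite Rmin_left in Hx by lra. rewrite Rmax_right in Hx by lra.
      apply gD_cont_r; lra. }
  rewrite E. apply (is_derive_RInt_param (fun u r => gim k t u r)).
  - apply (filter_imp (fun x => 0 < x)). 2: apply locally_pos; auto.
    intros x Hx r Hr. rewrite Rmin_left in Hr by lra. rewrite Rmax_right in Hr by lra.
    eexists. apply der_p; auto.
  - intros r Hr. rewrite Rmin_left in Hr by lra. rewrite Rmax_right in Hr by lra.
    apply continuity_2d_pt_filterlim.
    change (continuous (fun z : R*R => Derive (fun u => gim k t u (snd z)) (fst z)) (p,r)).
    apply (continuous_ext_loc _ (fun q : R*R => gD k t (fst q) (snd q))).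
    + assert (L1 : locally (p, r) (fun z : R*R => 0 < fst z)).
      { apply (continuous_fst p r). apply locally_pos; simpl; lra. }
      assert (L2 : locally (p, r) (fun z : R*R => 0 < snd z)).
      { apply (continuous_snd p r). apply locally_pos; simpl; lra. }
      apply (filter_imp _ _ (fun z H => H) ) in L1.
      generalize (filter_and _ _ L1 L2). apply filter_imp.
      intros [a b] [Ha Hb]; simpl in *. symmetry. apply is_derive_unique. apply der_p; auto.
    + apply gD_cont; lra.
  - apply (filter_imp (fun x => 0 < x)). 2: apply locally_pos; auto.
    intros x Hx. apply (ex_RInt_continuous (V:=R_CompleteNormedModule)). intros z Hz.
    rewrite Rmin_left in Hz by lra. rewrite Rmax_right in Hz by lra.
    apply gim_cont_r; lra.
Qed.

Lemma contour k t eps Rr : 0 < eps < Rr ->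
  RInt (fun r => gim k t PI r) eps Rr - RInt (fun r => gim k t (PI/2) r) eps Rr =
  RInt (fun p => Rr * gre k t p Rr - eps * gre k t p eps) (PI/2) PI.
Proof.
  intros He. symmetry. apply is_RInt_unique.
  assert (HPI := PI_RGT_0).
  apply (is_RInt_derive (fun p => RInt (fun r => gim k t p r) eps Rr)).
  - intros x Hx. rewrite Rmin_left in Hx by lra. rewrite Rmax_right in Hx by lra.
    apply Phi_derive; lra.
  - intros x Hx. rewrite Rmin_left in Hx by lra. rewrite Rmax_right in Hx by lra.
    apply (continuous_minus (fun p => Rr * gre k t p Rr) (fun p => eps * gre k t p eps)).
    + apply (continuous_mult (fun _ => Rr) (fun p => gre k t p Rr)). apply continuous_const. apply gre_cont_p; lra.
    + apply (continuous_mult (fun _ => eps) (fun p => gre k t p eps)). apply continuous_const. apply gre_cont_p; lra.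
Qed.
Lemma sin_lb_eq a : sin_lb a = a - a^3/6 + a^5/120 - a^7/5040.
Proof.
  unfold sin_lb, sin_approx, sin_term. simpl sum_f_R0.
  simpl. field.
Qed.
Lemma sin_ge_lin s : 0 <= s <= PI/2 -> s / 4 <= sin s.
Proof.
  intros Hs. assert (HP: 2 < PI) by (pose proof PI2_1; lra). pose proof PI_4 as HP4.
  destruct (Rle_lt_dec s 1).
  - destruct (SIN s) as [Hs1 _]; try lra. rewrite sin_lb_eq in Hs1.
    assert (0 <= s^3 <= 1) by (split; [apply pow_le; lra| replace 1 with (1^3) by ring; apply pow_incr; lra]).
    assert (0 <= s^7 <= 1) by (split; [apply pow_le; lra| replace 1 with (1^7) by ring; apply pow_incr; lra]).
    assert (0 <= s^5) by (apply pow_le; lra).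
    assert (s^2 <= 1) by (replace 1 with (1^2) by ring; apply pow_incr; lra).
    assert (s^6 <= 1) by (replace 1 with (1^6) by ring; apply pow_incr; lra).
    assert (s^3 <= s) by (replace (s^3) with (s*s^2) by ring; nra).
    assert (s^7 <= s) by (replace (s^7) with (s*s^6) by ring; nra). lra.
  - assert (sin 1 <= sin s) by (apply sin_incr_1; lra).
    destruct (SIN 1) as [H1 _]; try lra. rewrite sin_lb_eq in H1. lra.
Qed.

Lemma PI_ge2 : 2 < PI.
Proof. pose proof PI2_1; lra. Qed.

Lemma bnd_uv u v c s : -1<=c<=1 -> -1<=s<=1 -> u^2+v^2 <> 0 ->
  Rabs ((u*c+v*s)/(u^2+v^2)) <= (Rabs u + Rabs v)/(u^2+v^2).
Proof.
  intros Hc Hs Hn.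
  assert (Hy : 0 < u^2+v^2) by (destruct (Req_dec u 0); destruct (Req_dec v 0); subst; try nra; simpl in Hn; lra).
  unfold Rdiv. rewrite Rabs_mult, Rabs_inv, (Rabs_pos_eq (u^2+v^2)) by lra.
  apply Rmult_le_compat_r. left; apply Rinv_0_lt_compat; lra.
  eapply Rle_trans. apply Rabs_triang. rewrite !Rabs_mult.
  assert (Rabs c <= 1) by (apply Rabs_le; lra). assert (Rabs s <= 1) by (apply Rabs_le; lra).
  pose proof (Rabs_pos u). pose proof (Rabs_pos v). pose proof (Rabs_pos c). pose proof (Rabs_pos s). nra.
Qed.

Lemma bnd_AB u v : 0 < Rabs v -> (Rabs u + Rabs v)/(u^2+v^2) <= 2/Rabs v.
Proof.
  intros Hv. assert (u^2 = Rabs u ^2) by (rewrite RPow_abs; symmetry; apply Rabs_pos_eq; nra).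
  assert (v^2 = Rabs v ^2) by (rewrite RPow_abs; symmetry; apply Rabs_pos_eq; nra).
  rewrite H, H0. set (A := Rabs u) in *. set (B := Rabs v) in *. assert (0 <= A) by apply Rabs_pos.
  assert (0 < B^2) by (apply pow_lt; lra). assert (0 <= A^2) by (apply pow_le; lra). assert (0 < A^2 + B^2) by lra.
  assert (E : 2/B - (A+B)/(A^2+B^2) = (2*(A^2+B^2) - (A+B)*B)/(B*(A^2+B^2))) by (field; lra).
  cut (0 <= 2/B - (A+B)/(A^2+B^2)). lra. rewrite E.
  unfold Rdiv. apply Rmult_le_pos. simpl; nra. left; apply Rinv_0_lt_compat; nra.
Qed.

Lemma bnd_main u v c s : -1<=c<=1 -> -1<=s<=1 -> 0 < Rabs v ->
  Rabs ((u*c+v*s)/(u^2+v^2)) <= 2/Rabs v.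
Proof.
  intros. assert (u^2+v^2 <> 0).
  { assert (v <> 0) by (intro; subst; rewrite Rabs_R0 in H1; lra). nra. }
  eapply Rle_trans. apply bnd_uv; auto. apply bnd_AB; auto.
Qed.

Lemma bnd_main' u v c s : -1<=c<=1 -> -1<=s<=1 -> 0 < Rabs u ->
  Rabs ((u*c+v*s)/(u^2+v^2)) <= 2/Rabs u.
Proof.
  intros. replace ((u*c+v*s)/(u^2+v^2)) with ((v*s+u*c)/(v^2+u^2)) by (f_equal; ring).
  apply bnd_main; auto.
Qed.

Lemma cos_jordan p : PI/2 <= p <= PI -> cos p <= - ((p - PI/2)/4).
Proof.
  intros Hp. replace p with ((p - PI/2) + PI/2) at 1 by ring.
  rewrite cos_plus, cos_PI2, sin_PI2. pose proof (sin_ge_lin (p - PI/2)). lra.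
Qed.

Lemma gre_bnd_u k t p r : 0 < Rabs (gU k r) ->
  Rabs (gre k t p r) <= exp (t*r*cos p) * (2 / Rabs (gU k r)).
Proof.
  intros Hu. unfold gre.
  replace (exp (t * r * cos p) * (gU k r * cos (t * r * sin p + p) + p / 2 * sin (t * r * sin p + p)) /
   (gU k r ^ 2 + (p / 2) ^ 2)) with (exp (t * r * cos p) * ((gU k r * cos (t * r * sin p + p) + p / 2 * sin (t * r * sin p + p)) /
   (gU k r ^ 2 + (p / 2) ^ 2))) by (unfold Rdiv; ring).
  rewrite Rabs_mult, Rabs_pos_eq by (left; apply exp_pos).
  apply Rmult_le_compat_l. left; apply exp_pos.
  apply bnd_main'; auto using COS_bound, SIN_bound.
Qed.

Lemma gre_bnd_v k t p r : 0 < p -> 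
  Rabs (gre k t p r) <= exp (t*r*cos p) * (4 / p).
Proof.
  intros Hp. unfold gre.
  replace (exp (t * r * cos p) * (gU k r * cos (t * r * sin p + p) + p / 2 * sin (t * r * sin p + p)) /
   (gU k r ^ 2 + (p / 2) ^ 2)) with (exp (t * r * cos p) * ((gU k r * cos (t * r * sin p + p) + p / 2 * sin (t * r * sin p + p)) /
   (gU k r ^ 2 + (p / 2) ^ 2))) by (unfold Rdiv; ring).
  rewrite Rabs_mult, Rabs_pos_eq by (left; apply exp_pos).
  apply Rmult_le_compat_l. left; apply exp_pos.
  replace (4/p) with (2/Rabs (p/2)). apply bnd_main; auto using COS_bound, SIN_bound.
  rewrite Rabs_pos_eq; lra. rewrite Rabs_pos_eq by lra. field; lra.
Qed.

Lemma sq_pos a b : b <> 0 -> 0 < a^2 + b^2.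
Proof. intros. assert (0 < b^2) by (simpl; rewrite Rmult_1_r; apply Rsqr_pos_lt; auto). assert (0 <= a^2) by (simpl; rewrite Rmult_1_r; apply Rle_0_sqr). lra. Qed.

Definition w0 (k y : R) : R :=
  if Req_EM_T y 0 then 0 else /2 / ((/2 * ln (Rabs y) + k)^2 + (PI/2)^2).

Lemma sgn_pos y : 0 < y -> sgn y = 1.
Proof. intros; unfold sgn; destruct (Rlt_dec 0 y); lra. Qed.
Lemma sgn_neg y : y < 0 -> sgn y = -1.
Proof. intros; unfold sgn; destruct (Rlt_dec 0 y); try lra; destruct (Rlt_dec y 0); lra. Qed.

Lemma gim_PI2 k t r : 0 < r -> gim k t (PI/2) r = Kint_re k t r.
Proof.
  intros Hr. unfold gim, Kint_re, gU. destruct (Req_EM_T r 0); [lra|].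
  rewrite sgn_pos, Rabs_pos_eq by lra. rewrite cos_PI2, sin_PI2, sin_plus, cos_plus, cos_PI2, sin_PI2.
  replace (t*r*0) with 0 by ring. rewrite exp_0. replace (t*r*1) with (t*r) by ring.
  assert (0 < (/ 2 * ln r + k) ^ 2 + (PI / 2 / 2) ^ 2) by (apply sq_pos; pose proof PI_RGT_0; lra).
  replace (PI/2/2) with (PI/4) in * by field. field. lra.
Qed.

Lemma gim_PI k t r : 0 < r -> gim k t PI r = PI * (exp (-(t*r)) * w0 k r).
Proof.
  intros Hr. unfold gim, w0, gU. destruct (Req_EM_T r 0); [lra|].
  rewrite Rabs_pos_eq by lra. rewrite cos_PI, sin_PI.
  replace (t*r*0+PI) with PI by ring. rewrite cos_PI, sin_PI. replace (t*r*(-1)) with (-(t*r)) by ring.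
  assert (0 < (/ 2 * ln r + k) ^ 2 + (PI / 2) ^ 2) by (apply sq_pos; pose proof PI_RGT_0; lra).
  field. lra.
Qed.

Lemma Kint_re_even k t y : Kint_re k t (-y) = Kint_re k t y.
Proof.
  unfold Kint_re. destruct (Req_EM_T y 0) as [->|Hy].
  - rewrite Ropp_0. destruct (Req_EM_T 0 0); lra.
  - destruct (Req_EM_T (-y) 0); [lra|]. rewrite Rabs_Ropp.
    replace (t * - y) with (-(t*y)) by ring. rewrite cos_neg, sin_neg.
    destruct (Rlt_dec 0 y).
    + rewrite (sgn_pos y), (sgn_neg (-y)) by lra. f_equal; ring.
    + assert (y < 0) by lra. rewrite (sgn_neg y), (sgn_pos (-y)) by lra. f_equal; ring.
Qed.

Lemma Kint_im_odd k t y : Kint_im k t (-y) = - Kint_im k t y.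
Proof.
  unfold Kint_im. destruct (Req_EM_T y 0) as [->|Hy].
  - rewrite Ropp_0. destruct (Req_EM_T 0 0); lra.
  - destruct (Req_EM_T (-y) 0); [lra|]. rewrite Rabs_Ropp.
    replace (t * - y) with (-(t*y)) by ring. rewrite cos_neg, sin_neg.
    destruct (Rlt_dec 0 y).
    + rewrite (sgn_pos y), (sgn_neg (-y)) by lra. replace ((PI/4 * -1)^2) with ((PI/4*1)^2) by ring. unfold Rdiv. ring.
    + assert (y < 0) by lra. rewrite (sgn_neg y), (sgn_pos (-y)) by lra. replace ((PI/4 * -1)^2) with ((PI/4*1)^2) by ring. unfold Rdiv. ring.
Qed.

Lemma ln_small (M : R) : exists d, 0 < d /\ forall y, 0 < y < d -> ln y < M.
Proof.
  exists (exp M). split. apply exp_pos. intros y Hy.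
  rewrite <- (ln_exp M). apply ln_increasing; lra.
Qed.

Lemma cont0 f k : f 0 = 0 ->
  (forall y, y <> 0 -> 0 < Rabs (/2*ln(Rabs y)+k) -> Rabs (f y) <= 2/Rabs(/2*ln(Rabs y)+k)) ->
  continuous f 0.
Proof.
  intros H0 Hb. apply continuity_pt_filterlim. intros eps Heps.
  destruct (ln_small (2*(-(2/eps) - Rabs k - 1))) as [d [Hd Hd2]].
  exists d. split; auto. intros y [_ Hy]. simpl in *. unfold R_dist in *. rewrite H0, Rminus_0_r. rewrite Rminus_0_r in Hy.
  destruct (Req_dec y 0) as [->|Hy0]. rewrite H0, Rabs_R0; lra.
  assert (Hl := Hd2 (Rabs y) (conj (Rabs_pos_lt y Hy0) Hy)).
  assert (k <= Rabs k) by apply RRle_abs.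
  assert (/ 2 * ln (Rabs y) + k < -(2/eps) - 1) by lra.
  assert (2/eps > 0) by (apply Rdiv_lt_0_compat; lra).
  assert (E : Rabs (/ 2 * ln (Rabs y) + k) = - (/ 2 * ln (Rabs y) + k)) by (apply Rabs_left; lra).
  eapply Rle_lt_trans. apply Hb; auto. rewrite E; lra.
  rewrite E. apply (Rmult_lt_reg_r (- (/ 2 * ln (Rabs y) + k))). lra.
  unfold Rdiv. rewrite Rmult_assoc, Rinv_l by lra.
  apply (Rmult_lt_reg_l (/eps)). apply Rinv_0_lt_compat; lra.
  replace (/eps * (2*1)) with (2/eps) by (unfold Rdiv; ring).
  replace (/ eps * (eps * - (/ 2 * ln (Rabs y) + k))) with (- (/ 2 * ln (Rabs y) + k)) by (field; lra).
  lra.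
Qed.

Lemma PI4_pos : 0 < PI/4.
Proof. pose proof PI_RGT_0; lra. Qed.

Lemma den_ne a : a ^ 2 + (PI/4*1)^2 <> 0.
Proof. apply Rgt_not_eq, sq_pos. pose proof PI4_pos; lra. Qed.
Lemma den_ne' a : a ^ 2 + (PI/4* -1)^2 <> 0.
Proof. apply Rgt_not_eq, sq_pos. pose proof PI4_pos; lra. Qed.
Lemma den_ne2 a : a ^ 2 + (PI/2)^2 <> 0.
Proof. apply Rgt_not_eq, sq_pos. pose proof PI_RGT_0; lra. Qed.

Ltac cont_loc y0 H :=
  apply continuous_ext_loc with (2 := ex_derive_continuous _ _ H);
  [ match goal with |- locally ?y0 _ => idtac end ].

Lemma Kint_re_cont k t y0 : continuous (Kint_re k t) y0.
Proof.
  destruct (Rtotal_order y0 0) as [Hn|[->|Hp]].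
  - assert (H : ex_derive (fun y => (cos (t*y) * (/2*ln (-y) + k) + sin (t*y) * (PI/4 * -1)) /
                 ((/2*ln (-y) + k)^2 + (PI/4 * -1)^2)) y0).
    { pose proof (den_ne' (/2*ln (-y0) + k)). auto_derive. repeat split; try lra. }
    apply continuous_ext_loc with (2 := ex_derive_continuous _ _ H).
    apply (filter_imp (fun y => y < 0)). 2: apply (open_lt 0 y0 Hn).
    intros y Hy. unfold Kint_re. destruct (Req_EM_T y 0); [lra|].
    rewrite sgn_neg, Rabs_left by lra. reflexivity.
  - apply (cont0 _ k). unfold Kint_re. destruct (Req_EM_T 0 0); lra.
    intros y Hy Ha. unfold Kint_re. destruct (Req_EM_T y 0); [lra|].
    replace (cos (t * y) * (/ 2 * ln (Rabs y) + k) + sin (t * y) * (PI / 4 * sgn y)) with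
      ((/ 2 * ln (Rabs y) + k) * cos (t*y) + (PI / 4 * sgn y) * sin (t*y)) by ring.
    apply bnd_main'; auto using COS_bound, SIN_bound.
  - assert (H : ex_derive (fun y => (cos (t*y) * (/2*ln y + k) + sin (t*y) * (PI/4 * 1)) /
                 ((/2*ln y + k)^2 + (PI/4 * 1)^2)) y0).
    { pose proof (den_ne (/2*ln y0 + k)). auto_derive. repeat split; try lra. }
    apply continuous_ext_loc with (2 := ex_derive_continuous _ _ H).
    apply (filter_imp (fun y => 0 < y)). 2: apply (open_gt 0 y0 Hp).
    intros y Hy. unfold Kint_re. destruct (Req_EM_T y 0); [lra|].
    rewrite sgn_pos, Rabs_pos_eq by lra. reflexivity.
Qed.

Lemma Kint_im_cont k t y0 : continuous (Kint_im k t) y0.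
Proof.
  destruct (Rtotal_order y0 0) as [Hn|[->|Hp]].
  - assert (H : ex_derive (fun y => (sin (t*y) * (/2*ln (-y) + k) - cos (t*y) * (PI/4 * -1)) /
                 ((/2*ln (-y) + k)^2 + (PI/4 * -1)^2)) y0).
    { pose proof (den_ne' (/2*ln (-y0) + k)). auto_derive. repeat split; try lra. }
    apply continuous_ext_loc with (2 := ex_derive_continuous _ _ H).
    apply (filter_imp (fun y => y < 0)). 2: apply (open_lt 0 y0 Hn).
    intros y Hy. unfold Kint_im. destruct (Req_EM_T y 0); [lra|].
    rewrite sgn_neg, Rabs_left by lra. reflexivity.
  - apply (cont0 _ k). unfold Kint_im. destruct (Req_EM_T 0 0); lra.
    intros y Hy Ha. unfold Kint_im. destruct (Req_EM_T y 0); [lra|].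
    replace (sin (t * y) * (/ 2 * ln (Rabs y) + k) - cos (t * y) * (PI / 4 * sgn y)) with
      ((/ 2 * ln (Rabs y) + k) * sin (t*y) + (PI / 4 * sgn y) * (- cos (t*y))) by ring.
    apply bnd_main'; auto using COS_bound, SIN_bound.
    pose proof (COS_bound (t*y)); lra.
  - assert (H : ex_derive (fun y => (sin (t*y) * (/2*ln y + k) - cos (t*y) * (PI/4 * 1)) /
                 ((/2*ln y + k)^2 + (PI/4 * 1)^2)) y0).
    { pose proof (den_ne (/2*ln y0 + k)). auto_derive. repeat split; try lra. }
    apply continuous_ext_loc with (2 := ex_derive_continuous _ _ H).
    apply (filter_imp (fun y => 0 < y)). 2: apply (open_gt 0 y0 Hp).
    intros y Hy. unfold Kint_im. destruct (Req_EM_T y 0); [lra|].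
    rewrite sgn_pos, Rabs_pos_eq by lra. reflexivity.
Qed.

Lemma w0_bnd_a k y : 0 < Rabs (/2*ln(Rabs y)+k) -> /2 / ((/2 * ln (Rabs y) + k)^2 + (PI/2)^2) <= 2/Rabs(/2*ln(Rabs y)+k).
Proof.
  intros H. set (a := /2*ln(Rabs y)+k) in *.
  assert (Ea : a^2 = Rabs a ^2) by (rewrite RPow_abs; symmetry; apply Rabs_pos_eq; simpl; nra).
  rewrite Ea. set (A := Rabs a) in *. pose proof PI_ge2.
  assert (1 < (PI/2)^2) by (simpl; nra).
  assert (0 < A^2 + (PI/2)^2) by (simpl; nra).
  assert (E : 2/A - /2/(A^2+(PI/2)^2) = (4*(A^2+(PI/2)^2) - A)/(2*A*(A^2+(PI/2)^2))) by (field; lra).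
  cut (0 <= 2/A - /2/(A^2+(PI/2)^2)). lra. rewrite E.
  unfold Rdiv. apply Rmult_le_pos. simpl; nra. left; apply Rinv_0_lt_compat; nra.
Qed.

Lemma w0_range k y : 0 <= w0 k y <= 1.
Proof.
  unfold w0. destruct (Req_EM_T y 0). lra.
  pose proof PI_ge2. set (a := /2*ln(Rabs y)+k).
  assert (0 <= a^2) by (simpl; nra). assert (1 < (PI/2)^2) by (simpl; nra).
  split. unfold Rdiv; apply Rmult_le_pos; [lra|left; apply Rinv_0_lt_compat; lra].
  apply (Rmult_le_reg_r ((a^2 + (PI/2)^2))). lra. unfold Rdiv. rewrite Rmult_assoc, Rinv_l by lra. lra.
Qed.

Lemma w0_cont k y0 : continuous (w0 k) y0.
Proof.
  destruct (Rtotal_order y0 0) as [Hn|[->|Hp]].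
  - assert (H : ex_derive (fun y => /2 / ((/2*ln (-y) + k)^2 + (PI/2)^2)) y0).
    { pose proof (den_ne2 (/2*ln (-y0) + k)). auto_derive. repeat split; try lra. }
    apply continuous_ext_loc with (2 := ex_derive_continuous _ _ H).
    apply (filter_imp (fun y => y < 0)). 2: apply (open_lt 0 y0 Hn).
    intros y Hy. unfold w0. destruct (Req_EM_T y 0); [lra|].
    rewrite Rabs_left by lra. reflexivity.
  - apply (cont0 _ k). unfold w0. destruct (Req_EM_T 0 0); lra.
    intros y Hy Ha. unfold w0. destruct (Req_EM_T y 0); [lra|].
    rewrite Rabs_pos_eq. apply w0_bnd_a; auto.
    pose proof (w0_range k y) as Hr. unfold w0 in Hr. destruct (Req_EM_T y 0); [lra|]. lra.
  - assert (H : ex_derive (fun y => /2 / ((/2*ln y + k)^2 + (PI/2)^2)) y0).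
    { pose proof (den_ne2 (/2*ln y0 + k)). auto_derive. repeat split; try lra. }
    apply continuous_ext_loc with (2 := ex_derive_continuous _ _ H).
    apply (filter_imp (fun y => 0 < y)). 2: apply (open_gt 0 y0 Hp).
    intros y Hy. unfold w0. destruct (Req_EM_T y 0); [lra|].
    rewrite Rabs_pos_eq by lra. reflexivity.
Qed.

Lemma exp_mono x y : x <= y -> exp x <= exp y.
Proof. intros [H|H]. left; apply exp_increasing; auto. subst; lra. Qed.

Lemma exR (f : R -> R) a b : (forall x, continuous f x) -> ex_RInt f a b.
Proof. intros H. apply (ex_RInt_continuous (V:=R_CompleteNormedModule)). intros; apply H. Qed.

Lemma RInt_abs_const (f : R -> R) a b c : a <= b -> ex_RInt f a b ->
  (forall x, a < x < b -> Rabs (f x) <= c) -> Rabs (RInt f a b) <= c * (b - a).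
Proof.
  intros Hab Hex Hb. eapply Rle_trans. apply abs_RInt_le; auto.
  replace (c * (b-a)) with (RInt (fun _ => c) a b).
  - apply RInt_le; auto. apply ex_RInt_norm; auto. apply ex_RInt_const.
  - rewrite RInt_const. unfold scal; simpl; unfold mult; simpl. ring.
Qed.

Lemma exp_int lam c a b : 0 < lam -> c <= a <= b ->
  RInt (fun x => exp (-(lam*(x-c)))) a b <= /lam.
Proof.
  intros Hl Hab.
  rewrite (is_RInt_unique _ a b (minus (-/lam * exp (-(lam*(b-c)))) (-/lam * exp (-(lam*(a-c)))))).
  - unfold minus, plus, opp; simpl.
    assert (exp (-(lam*(a-c))) <= 1) by (rewrite <- exp_0; apply exp_mono; nra).
    pose proof (exp_pos (-(lam*(b-c)))).
    assert (0 < /lam) by (apply Rinv_0_lt_compat; lra). nra.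
  - apply (is_RInt_derive (fun x => -/lam * exp (-(lam*(x-c))))).
    + intros x _. auto_derive. auto. replace (x + - c) with (x - c) by ring. field. lra.
    + intros x _. apply (ex_derive_continuous (fun x => exp (-(lam*(x-c))))). auto_derive. auto.
Qed.

Lemma ex_RInt_exp lam c a b : ex_RInt (fun x => exp (-(lam*(x-c)))) a b.
Proof. apply exR. intros x. apply (ex_derive_continuous (fun x => exp (-(lam*(x-c))))). auto_derive. auto. Qed.

Lemma improper_lim (f : R -> R) a C t : 0 <= a -> 0 < t ->
  (forall x, continuous f x) -> (forall x, a <= x -> 0 <= f x <= C * exp (-(t*x))) ->
  exists L, forall eps, 0 < eps -> exists M, a <= M /\ forall b, M <= b -> Rabs (RInt f a b - L) < eps.
Proof.
  intros Ha Ht Hc Hb.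
  assert (HC : 0 <= C). { destruct (Hb a) as [H1 H2]; try lra. pose proof (exp_pos (-(t*a))). nra. }
  set (E := fun y => exists b, a <= b /\ y = RInt f a b).
  assert (Hmono : forall b1 b2, a <= b1 <= b2 -> RInt f a b1 <= RInt f a b2).
  { intros b1 b2 Hb12. rewrite <- (RInt_Chasles f a b1 b2) by (apply exR; auto).
    unfold plus; simpl. assert (0 <= RInt f b1 b2). apply RInt_ge_0. lra. apply exR; auto.
    intros x Hx. apply Hb; lra. lra. }
  assert (Hbnd : bound E).
  { exists (C / t). intros y [b [Hab ->]].
    apply Rle_trans with (RInt (fun x => C * exp (-(t*(x-0)))) a b).
    apply RInt_le; auto. apply exR; auto. apply (ex_RInt_scal (V:=R_NormedModule) (fun x => exp (-(t*(x-0)))) a b C). apply ex_RInt_exp.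
    intros x Hx. rewrite Rminus_0_r. apply Hb; lra.
    assert (Hs := RInt_scal (V:=R_CompleteNormedModule) (fun x => exp (-(t*(x-0)))) a b C (ex_RInt_exp _ _ _ _)).
    unfold scal in Hs; simpl in Hs; unfold mult in Hs; simpl in Hs. rewrite Hs. unfold Rdiv.
    apply Rmult_le_compat_l; auto. apply exp_int; lra. }
  destruct (completeness E Hbnd) as [L [HL1 HL2]]. { exists (RInt f a a). exists a; split; lra. }
  exists L. intros eps Heps.
  assert (exists b0, a <= b0 /\ L - eps < RInt f a b0) as [b0 [Hb0 Hb0']].
  { apply Classical_Prop.NNPP. intros Hn. assert (is_upper_bound E (L - eps)).
    { intros y [b [Hab ->]]. apply Rnot_lt_le. intro. apply Hn. exists b; split; auto. }
    apply HL2 in H. lra. }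
  exists b0. split; auto. intros b Hbb.
  assert (RInt f a b <= L) by (apply HL1; exists b; split; lra).
  assert (RInt f a b0 <= RInt f a b) by (apply Hmono; lra).
  apply Rabs_def1; lra.
Qed.

Lemma arc_bnd k t eps Rr : 0 < t -> 0 < eps < Rr -> 0 < Rabs (gU k Rr) ->
  Rabs (RInt (fun p => Rr * gre k t p Rr - eps * gre k t p eps) (PI/2) PI)
  <= 8/(t*Rabs (gU k Rr)) + 8*eps.
Proof.
  intros Ht He Hu. pose proof PI_ge2. pose proof PI_4.
  set (u := Rabs (gU k Rr)) in *.
  set (g := fun p => (2*Rr/u) * exp (-((t*Rr/4)*(p - PI/2))) + 4*eps).
  assert (Hex : ex_RInt (fun p => Rr * gre k t p Rr - eps * gre k t p eps) (PI/2) PI).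
  { apply (ex_RInt_continuous (V:=R_CompleteNormedModule)). intros z Hz.
    rewrite Rmin_left in Hz by lra. rewrite Rmax_right in Hz by lra.
    apply (continuous_minus (fun p => Rr * gre k t p Rr) (fun p => eps * gre k t p eps)).
    + apply (continuous_mult (fun _ => Rr) (fun p => gre k t p Rr)). apply continuous_const. apply gre_cont_p; lra.
    + apply (continuous_mult (fun _ => eps) (fun p => gre k t p eps)). apply continuous_const. apply gre_cont_p; lra. }
  assert (HG : is_RInt g (PI/2) PI (minus ((2*Rr/u) * (-(4/(t*Rr)) * exp (-((t*Rr/4)*(PI - PI/2)))) + 4*eps*PI)
                                          ((2*Rr/u) * (-(4/(t*Rr)) * exp (-((t*Rr/4)*(PI/2 - PI/2)))) + 4*eps*(PI/2)))).
  { apply (is_RInt_derive (fun p => (2*Rr/u) * (-(4/(t*Rr)) * exp (-((t*Rr/4)*(p - PI/2)))) + 4*eps*p)).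
    - intros x _. unfold g. auto_derive. auto. replace (x + - (PI/2)) with (x - PI/2) by ring. field. split; lra.
    - intros x _. apply (ex_derive_continuous g). unfold g. auto_derive. auto. }
  eapply Rle_trans. apply abs_RInt_le; [lra|auto].
  eapply Rle_trans. apply (RInt_le _ g). lra. apply ex_RInt_norm; auto. eexists; apply HG.
  - intros p Hp. unfold Rminus. eapply Rle_trans. apply Rabs_triang. rewrite Rabs_Ropp, !Rabs_mult.
    rewrite (Rabs_pos_eq Rr), (Rabs_pos_eq eps) by lra. unfold g.
    apply Rplus_le_compat.
    + assert (Hg := gre_bnd_u k t p Rr Hu). fold u in Hg.
      assert (He2 : exp (t*Rr*cos p) <= exp (- (t * Rr / 4 * (p - PI / 2)))).
      { apply exp_mono. pose proof (cos_jordan p). assert (0 < t*Rr) by nra. nra. }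
      assert (Hc : 0 < 2/u) by (unfold Rdiv; apply Rmult_lt_0_compat; [lra|apply Rinv_0_lt_compat; lra]).
      replace (2*Rr/u) with (Rr*(2/u)) by (unfold Rdiv; ring).
      rewrite Rmult_assoc. apply Rmult_le_compat_l. lra.
      eapply Rle_trans. apply Hg. rewrite Rmult_comm. apply Rmult_le_compat_l; lra.
    + rewrite Rmult_comm. apply Rmult_le_compat_r. lra.
      eapply Rle_trans. apply gre_bnd_v; lra.
      assert (exp (t * eps * cos p) <= 1).
      { rewrite <- exp_0. apply exp_mono. pose proof (cos_le_0 p). assert (cos p <= 0) by (apply cos_le_0; lra).
        assert (0 < t*eps) by nra. nra. }
      assert (4/p <= 4). { apply (Rmult_le_reg_r p). lra. unfold Rdiv. rewrite Rmult_assoc, Rinv_l by lra. nra. }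
      assert (0 <= 4/p) by (unfold Rdiv; apply Rmult_le_pos; [lra|left; apply Rinv_0_lt_compat; lra]).
      pose proof (exp_pos (t * eps * cos p)). nra.
  - rewrite (is_RInt_unique _ _ _ _ HG). unfold minus, plus, opp; simpl.
    replace (PI/2 - PI/2) with 0 by ring. rewrite Rmult_0_r, Ropp_0, exp_0.
    pose proof (exp_pos (- (t * Rr / 4 * (PI - PI / 2)))).
    assert (0 < 2*Rr/u * (4/(t*Rr))) by (unfold Rdiv; apply Rmult_lt_0_compat; [apply Rmult_lt_0_compat;[lra|apply Rinv_0_lt_compat; lra] | apply Rmult_lt_0_compat;[lra|apply Rinv_0_lt_compat; nra]]).
    assert (E : 2*Rr/u * (4/(t*Rr)) = 8/(t*u)) by (field; split; lra).
    nra.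
Qed.

Definition hfun (k t r : R) := PI * (exp (-(t*r)) * w0 k r).

Lemma hfun_cont k t x : continuous (hfun k t) x.
Proof.
  unfold hfun. apply (continuous_mult (fun _ => PI) (fun r => exp (-(t*r)) * w0 k r)).
  apply continuous_const.
  apply (continuous_mult (fun r => exp (-(t*r))) (w0 k)).
  apply (ex_derive_continuous (fun r => exp (-(t*r)))). auto_derive; auto.
  apply w0_cont.
Qed.

Lemma Kre_bnd4 k t y : Rabs (Kint_re k t y) <= 4.
Proof.
  unfold Kint_re. destruct (Req_EM_T y 0). rewrite Rabs_R0; lra.
  replace (cos (t * y) * (/ 2 * ln (Rabs y) + k) + sin (t * y) * (PI / 4 * sgn y)) with
      ((/ 2 * ln (Rabs y) + k) * cos (t*y) + (PI / 4 * sgn y) * sin (t*y)) by ring.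
  assert (Hs : Rabs (PI/4 * sgn y) = PI/4).
  { pose proof PI4_pos. destruct (Rlt_dec 0 y). rewrite sgn_pos by lra. rewrite Rmult_1_r, Rabs_pos_eq; lra.
    rewrite sgn_neg by lra. rewrite Rabs_left; lra. }
  eapply Rle_trans. apply bnd_main; auto using COS_bound, SIN_bound. rewrite Hs; apply PI4_pos.
  rewrite Hs. pose proof PI_ge2. apply (Rmult_le_reg_r (PI/4)). lra.
  unfold Rdiv. rewrite Rmult_assoc, Rinv_l by lra. lra.
Qed.

Lemma hfun_bnd k t y : 0 <= t -> 0 <= y -> Rabs (hfun k t y) <= 4.
Proof.
  intros. unfold hfun. pose proof (w0_range k y). pose proof PI_4. pose proof PI_RGT_0.
  assert (exp (-(t*y)) <= 1) by (rewrite <- exp_0; apply exp_mono; nra).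
  pose proof (exp_pos (-(t*y))).
  assert (0 <= exp (-(t*y)) * w0 k y <= 1) by (split; nra).
  rewrite Rabs_pos_eq. nra. apply Rmult_le_pos; lra.
Qed.

Lemma main_est_eps k t Rr eps : 0 < t -> 0 < eps < Rr -> 0 < Rabs (gU k Rr) ->
  Rabs (RInt (Kint_re k t) 0 Rr - RInt (hfun k t) 0 Rr) <= 8 / (t * Rabs (gU k Rr)) + 16*eps.
Proof.
  intros Ht He Hu. pose proof PI_ge2. pose proof PI_4.
  assert (HA := RInt_Chasles (Kint_re k t) 0 eps Rr (exR _ _ _ (Kint_re_cont k t)) (exR _ _ _ (Kint_re_cont k t))).
  assert (HB := RInt_Chasles (hfun k t) 0 eps Rr (exR _ _ _ (hfun_cont k t)) (exR _ _ _ (hfun_cont k t))).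
  unfold plus in HA, HB; simpl in HA, HB. rewrite <- HA, <- HB.
  pose proof (contour k t eps Rr He) as Hc.
  rewrite (RInt_ext (fun r => gim k t PI r) (hfun k t)) in Hc.
  2:{ intros x Hx. rewrite Rmin_left in Hx by lra. apply gim_PI. lra. }
  rewrite (RInt_ext (fun r => gim k t (PI/2) r) (Kint_re k t)) in Hc.
  2:{ intros x Hx. rewrite Rmin_left in Hx by lra. apply gim_PI2. lra. }
  pose proof (arc_bnd k t eps Rr Ht He Hu) as Harc.
  assert (H1 : Rabs (RInt (Kint_re k t) 0 eps) <= 4 * (eps - 0)).
  { apply RInt_abs_const. lra. apply exR, Kint_re_cont. intros; apply Kre_bnd4. }
  assert (H2 : Rabs (RInt (hfun k t) 0 eps) <= 4 * (eps - 0)).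
  { apply RInt_abs_const. lra. apply exR, hfun_cont. intros; apply hfun_bnd; lra. }
  set (a1 := RInt (Kint_re k t) 0 eps) in *. set (a2 := RInt (Kint_re k t) eps Rr) in *.
  set (b1 := RInt (hfun k t) 0 eps) in *. set (b2 := RInt (hfun k t) eps Rr) in *.
  set (c := RInt _ (PI/2) PI) in *.
  replace (a1 + a2 - (b1 + b2)) with (a1 - b1 - c) by lra.
  unfold Rminus at 1. eapply Rle_trans. apply Rabs_triang. rewrite Rabs_Ropp.
  unfold Rminus. eapply Rle_trans. apply Rplus_le_compat_r. apply Rabs_triang. rewrite Rabs_Ropp.
  lra.
Qed.

Lemma main_est k t Rr : 0 < t -> 0 < Rr -> 0 < Rabs (gU k Rr) ->
  Rabs (RInt (Kint_re k t) 0 Rr - RInt (hfun k t) 0 Rr) <= 8 / (t * Rabs (gU k Rr)).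
Proof.
  intros Ht HR Hu. set (X := Rabs (RInt (Kint_re k t) 0 Rr - RInt (hfun k t) 0 Rr)). set (B := 8 / (t * Rabs (gU k Rr))).
  apply Rnot_lt_le. intros Hlt.
  set (eps := Rmin (Rr/2) ((X - B)/32)).
  assert (0 < eps) by (apply Rmin_pos; lra).
  assert (eps <= Rr/2) by apply Rmin_l. assert (eps <= (X-B)/32) by apply Rmin_r.
  assert (He : 0 < eps < Rr) by lra.
  pose proof (main_est_eps k t Rr eps Ht He Hu) as H2. fold X B in H2. lra.
Qed.

Lemma RInt_refl_half (f : R -> R) Rr : (forall x, continuous f x) ->
  RInt f (-Rr) 0 = RInt (fun y => f (-y)) 0 Rr.
Proof.
  intros Hc.
  assert (H := RInt_comp_lin (V:=R_CompleteNormedModule) f (-1) 0 0 Rr (exR _ _ _ Hc)).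
  replace (-1*0+0) with 0 in H by ring. replace (-1*Rr+0) with (-Rr) in H by ring.
  rewrite RInt_scal in H.
  2:{ apply exR. intros x. apply (continuous_comp (fun y => -1*y+0) f). apply (ex_derive_continuous (fun y => -1*y+0)). auto_derive; auto. apply Hc. }
  rewrite (RInt_ext (fun y => f (-1*y+0)) (fun y => f (-y))) in H.
  2:{ intros x _. f_equal. ring. }
  unfold scal in H; simpl in H; unfold mult in H; simpl in H.
  rewrite <- opp_RInt_swap by (apply exR; auto). rewrite <- H. unfold opp; simpl. ring.
Qed.

Lemma RInt_even (f : R -> R) Rr : (forall x, continuous f x) -> (forall y, f (-y) = f y) ->
  RInt f (-Rr) Rr = 2 * RInt f 0 Rr.
Proof.
  intros Hc He. rewrite <- (RInt_Chasles f (-Rr) 0 Rr) by (apply exR; auto).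
  rewrite RInt_refl_half by auto. rewrite (RInt_ext (fun y => f (-y)) f) by (intros; apply He).
  unfold plus; simpl. ring.
Qed.

Lemma RInt_odd (f : R -> R) Rr : (forall x, continuous f x) -> (forall y, f (-y) = - f y) ->
  RInt f (-Rr) Rr = 0.
Proof.
  intros Hc He. rewrite <- (RInt_Chasles f (-Rr) 0 Rr) by (apply exR; auto).
  rewrite RInt_refl_half by auto. rewrite (RInt_ext (fun y => f (-y)) (fun y => -1 * f y)) by (intros x _; rewrite He; change (- f x = -1 * f x); ring).
  assert (H := RInt_scal (V:=R_CompleteNormedModule) f 0 Rr (-1) (exR _ _ _ Hc)).
  unfold scal in H; simpl in H; unfold mult in H; simpl in H. rewrite H.
  unfold plus; simpl. ring.
Qed.

Definition Dn (k : R) (n : nat) (t : R) := RInt (fun r => (-r)^n * exp (-(t*r)) * w0 k r) 0 1.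

Lemma Dn_integrand_cont k n t x : continuous (fun r => (-r)^n * exp (-(t*r)) * w0 k r) x.
Proof.
  apply (continuous_mult (fun r => (-r)^n * exp (-(t*r))) (w0 k)).
  apply (ex_derive_continuous (fun r => (-r)^n * exp (-(t*r)))). auto_derive; auto.
  apply w0_cont.
Qed.

Lemma Dn_deriv k n t : is_derive (Dn k n) t (Dn k (S n) t).
Proof.
  assert (Hd : forall u r, is_derive (fun u => (-r)^n * exp(-(u*r)) * w0 k r) u ((-r)^(S n) * exp(-(u*r)) * w0 k r)).
  { intros. auto_derive. auto. simpl. ring. }
  unfold Dn.
  replace (RInt (fun r => (- r) ^ S n * exp (- (t * r)) * w0 k r) 0 1) with
    (RInt (fun r => Derive (fun u => (-r)^n * exp(-(u*r)) * w0 k r) t) 0 1).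
  2:{ apply RInt_ext. intros x _. apply is_derive_unique. apply Hd. }
  apply (is_derive_RInt_param (fun u r => (-r)^n * exp(-(u*r)) * w0 k r)).
  - apply filter_forall. intros x r _. eexists; apply Hd.
  - intros r _. apply continuity_2d_pt_filterlim.
    change (continuous (fun z : R*R => Derive (fun u => (- snd z)^n * exp(-(u* snd z)) * w0 k (snd z)) (fst z)) (t,r)).
    apply (continuous_ext (fun q : R*R => (- snd q)^(S n) * exp(-(fst q * snd q)) * w0 k (snd q))).
    + intros q. symmetry. apply is_derive_unique. apply Hd.
    + cont2. apply (c2_comp (fun q => snd q) (w0 k)). apply c2_snd. apply w0_cont.
  - apply filter_forall. intros x. apply exR. intros y. apply Dn_integrand_cont.
Qed.

Lemma Dn_bnd k t : 0 <= t -> Rabs (Dn k 0 t) <= 1.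
Proof.
  intros Ht. unfold Dn. replace 1 with (1 * (1 - 0)) at 2 by ring.
  apply RInt_abs_const. lra. apply exR. intros; apply Dn_integrand_cont.
  intros x Hx. simpl. rewrite Rmult_1_l. pose proof (w0_range k x).
  assert (exp (-(t*x)) <= 1) by (rewrite <- exp_0; apply exp_mono; nra).
  pose proof (exp_pos (-(t*x))).
  rewrite Rabs_pos_eq by nra. nra.
Qed.

Lemma Dn_smooth k : smooth_on_nonneg (Dn k 0).
Proof.
  exists (Dn k). split. intros; reflexivity.
  intros n. split.
  - intros x _. apply is_derive_Reals. apply Dn_deriv.
  - intros eps Heps. pose proof (Dn_deriv k n 0) as H. apply is_derive_Reals in H.
    destruct (H eps Heps) as [del Hdel]. exists del. split. apply cond_pos.
    intros h Hh. replace h with (0 + h) at 1 by ring. apply Hdel. lra.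
    rewrite Rabs_pos_eq; lra.
Qed.

Lemma hfun_01 k t : RInt (hfun k t) 0 1 = PI * Dn k 0 t.
Proof.
  unfold Dn. rewrite (RInt_ext (hfun k t) (fun r => PI * ((-r)^0 * exp (-(t*r)) * w0 k r))).
  2:{ intros x _. unfold hfun. simpl. ring. }
  assert (H := RInt_scal (V:=R_CompleteNormedModule) (fun r => (-r)^0 * exp (-(t*r)) * w0 k r) 0 1 PI
    (exR _ _ _ (Dn_integrand_cont k 0 t))).
  unfold scal in H; simpl in H; unfold mult in H; simpl in H. exact H.
Qed.

Lemma gU_large k G : exists M, 0 < M /\ forall Rr, M <= Rr -> G <= gU k Rr.
Proof.
  exists (exp (2*(G-k))). split. apply exp_pos. intros Rr HR.
  unfold gU. assert (2*(G-k) <= ln Rr).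
  { rewrite <- (ln_exp (2*(G-k))). destruct HR as [HR|HR]. left; apply ln_increasing; auto. apply exp_pos. rewrite HR; lra. }
  lra.
Qed.

Lemma f1_cont k t y : 0 < y -> continuous (fun y => exp (- (t * y)) * Cinv_im (/ 2 * ln y + k) (PI / 2)) y.
Proof.
  intros Hy. apply (ex_derive_continuous (fun y => exp (- (t * y)) * Cinv_im (/ 2 * ln y + k) (PI / 2))).
  unfold Cinv_im. pose proof (den_ne2 (/2*ln y+k)). auto_derive. repeat split; auto.
Qed.

Lemma f2_cont k t y : 0 < y -> continuous (fun y => exp (- (t * y)) / ((ln y + 2 * k) ^ 2 + PI ^ 2)) y.
Proof.
  intros Hy. apply (ex_derive_continuous (fun y => exp (- (t * y)) / ((ln y + 2 * k) ^ 2 + PI ^ 2))).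
  assert ((ln y + 2*k)^2 + PI^2 <> 0) by (apply Rgt_not_eq, sq_pos; pose proof PI_RGT_0; lra).
  auto_derive. repeat split; auto.
Qed.

Lemma ex_from1 (f : R -> R) b : (forall y, 0 < y -> continuous f y) -> 1 <= b -> ex_RInt f 1 b.
Proof.
  intros H Hb. apply (ex_RInt_continuous (V:=R_CompleteNormedModule)). intros z Hz.
  rewrite Rmin_left in Hz by lra. apply H. lra.
Qed.

Theorem proposition5p1 (gam theta : R)
  (Hgam : Un_cv (fun n => sum_f_R0 (fun k => / INR (S k)) n - ln (INR (S n))) gam)
  (Hth : 0 <= theta < PI) (Hth2 : theta <> PI / 2) :
  exists K1 : R -> R,
    bounded_on_nonneg K1 /\ smooth_on_nonneg K1 /\
    forall t, 0 < t ->
      exists I1 I2 : R,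
        improper_int_from1
          (fun y => exp (- (t * y)) * Cinv_im (/ 2 * ln y + kappa gam theta) (PI / 2)) I1 /\
        improper_int_from1
          (fun y => exp (- (t * y)) / ((ln y + 2 * kappa gam theta) ^ 2 + PI ^ 2)) I2 /\
        sym_improper_int (Kint_re (kappa gam theta) t) (2 * PI * (- / PI * I1 + K1 t)) /\
        sym_improper_int (Kint_im (kappa gam theta) t) 0 /\
        - / PI * I1 + K1 t = 2 * I2 + K1 t.
Proof.
  set (k := kappa gam theta).
  exists (Dn k 0). split; [|split].
  - exists 1. intros; apply Dn_bnd; auto.
  - apply Dn_smooth.
  - intros t Ht. pose proof PI_RGT_0 as HPI.
    destruct (improper_lim (hfun k t) 0 PI t) as [L HL]; try lra.
    { apply hfun_cont. }
    { intros x Hx. unfold hfun. pose proof (w0_range k x). pose proof (exp_pos (-(t*x))). split.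
      apply Rmult_le_pos; [lra|]. apply Rmult_le_pos; lra. apply Rmult_le_compat_l; [lra|]. nra. }
    set (K := Dn k 0 t).
    assert (HK := hfun_01 k t). fold K in HK.
    assert (Hch : forall b, RInt (hfun k t) 1 b = RInt (hfun k t) 0 b - PI * K).
    { intros b. rewrite <- HK.
      assert (HC : RInt (hfun k t) 0 1 + RInt (hfun k t) 1 b = RInt (hfun k t) 0 b)
        by (apply (RInt_Chasles (V:=R_CompleteNormedModule)); apply exR, hfun_cont). lra. }
    exists (-(L - PI*K)), ((L - PI*K)/(2*PI)).
    split; [|split; [|split; [|split]]].
    +
      split.
      * intros b Hb. constructor. apply ex_RInt_Reals_0. apply ex_from1; auto. intros; apply f1_cont; auto.
      * intros eps Heps. destruct (HL eps Heps) as [M [HM HM2]].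
        exists (Rmax M 1). intros b pr Hb. rewrite <- RInt_Reals.
        rewrite (RInt_ext _ (fun y => -1 * hfun k t y)).
        2:{ intros x Hx. rewrite Rmin_left in Hx by (pose proof (Rmax_r M 1); lra).
            unfold hfun, Cinv_im, w0. destruct (Req_EM_T x 0); [lra|]. rewrite Rabs_pos_eq by lra.
            fold k. pose proof (den_ne2 (/2*ln x+k)). change (@eq R (exp (- (t * x)) * (- (PI / 2) / ((/ 2 * ln x + k) ^ 2 + (PI / 2) ^ 2))) (-1 * (PI * (exp (- (t * x)) * (/ 2 / ((/ 2 * ln x + k) ^ 2 + (PI / 2) ^ 2)))))). field. all: try lra. all: try auto. }
        assert (H := RInt_scal (V:=R_CompleteNormedModule) (hfun k t) 1 b (-1) (exR _ _ _ (hfun_cont k t))).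
        unfold scal in H; simpl in H; unfold mult in H; simpl in H. rewrite H, Hch.
        replace (-1 * (RInt (hfun k t) 0 b - PI * K) - - (L - PI * K)) with (- (RInt (hfun k t) 0 b - L)) by ring.
        rewrite Rabs_Ropp. apply HM2. pose proof (Rmax_l M 1); lra.
    +
      split.
      * intros b Hb. constructor. apply ex_RInt_Reals_0. apply ex_from1; auto. intros; apply f2_cont; auto.
      * intros eps Heps. destruct (HL (eps*(2*PI))) as [M [HM HM2]]. nra.
        exists (Rmax M 1). intros b pr Hb. rewrite <- RInt_Reals.
        rewrite (RInt_ext _ (fun y => /(2*PI) * hfun k t y)).
        2:{ intros x Hx. rewrite Rmin_left in Hx by (pose proof (Rmax_r M 1); lra).
            unfold hfun, w0. destruct (Req_EM_T x 0); [lra|]. rewrite Rabs_pos_eq by lra.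
            fold k. pose proof (den_ne2 (/2*ln x+k)).
            assert ((ln x + 2*k)^2 + PI^2 <> 0) by (apply Rgt_not_eq, sq_pos; lra).
            match goal with |- ?a = ?b => change (@eq R a b) end. field. all: try lra. all: try auto. }
        assert (H := RInt_scal (V:=R_CompleteNormedModule) (hfun k t) 1 b (/(2*PI)) (exR _ _ _ (hfun_cont k t))).
        unfold scal in H; simpl in H; unfold mult in H; simpl in H. rewrite H, Hch.
        replace (/ (2 * PI) * (RInt (hfun k t) 0 b - PI * K) - (L - PI * K) / (2 * PI)) with
          ((RInt (hfun k t) 0 b - L) / (2*PI)) by (field; lra).
        unfold Rdiv. rewrite Rabs_mult, Rabs_inv, (Rabs_pos_eq (2*PI)) by lra.
        apply (Rmult_lt_reg_r (2*PI)). lra. rewrite Rmult_assoc, Rinv_l by lra.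
        rewrite Rmult_1_r. apply HM2. pose proof (Rmax_l M 1); lra.
    +
      split.
      * intros Rr _. constructor. apply ex_RInt_Reals_0. apply exR, Kint_re_cont.
      * intros eps Heps. destruct (HL (eps/4)) as [M1 [HM1 HM1']]. lra.
        destruct (gU_large k (32/(t*eps) + 1)) as [M2 [HM2 HM2']].
        exists (Rmax M1 M2). intros Rr pr HR.
        assert (HR1 : M1 <= Rr) by (pose proof (Rmax_l M1 M2); lra).
        assert (HR2 : M2 <= Rr) by (pose proof (Rmax_r M1 M2); lra).
        rewrite <- RInt_Reals. rewrite RInt_even by (auto using Kint_re_cont, Kint_re_even).
        assert (Hpos : 0 < 32/(t*eps)) by (apply Rdiv_lt_0_compat; nra).
        assert (Hg := HM2' Rr HR2).
        assert (Hu : 0 < Rabs (gU k Rr)) by (rewrite Rabs_pos_eq; lra).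
        pose proof (main_est k t Rr Ht ltac:(lra) Hu) as Hm.
        pose proof (HM1' Rr HR1) as Hl.
        assert (Hb : 8 / (t * Rabs (gU k Rr)) <= eps/4).
        { rewrite Rabs_pos_eq by lra. apply (Rmult_le_reg_r (t * gU k Rr)). nra.
          unfold Rdiv. rewrite Rmult_assoc, Rinv_l by nra.
          assert (E : 32 / (t * eps) * (t*eps) = 32) by (field; lra).
          assert (t * eps * gU k Rr >= t*eps*(32 / (t * eps) + 1)) by (apply Rle_ge, Rmult_le_compat_l; nra).
          nra. }
        replace (2 * PI * (- / PI * - (L - PI * K) + K)) with (2 * L) by (field; lra).
        replace (2 * RInt (Kint_re k t) 0 Rr - 2 * L) with
          (2 * ((RInt (Kint_re k t) 0 Rr - RInt (hfun k t) 0 Rr) + (RInt (hfun k t) 0 Rr - L))) by ring.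
        rewrite Rabs_mult, (Rabs_pos_eq 2) by lra.
        pose proof (Rabs_triang (RInt (Kint_re k t) 0 Rr - RInt (hfun k t) 0 Rr) (RInt (hfun k t) 0 Rr - L)).
        lra.
    +
      split.
      * intros Rr _. constructor. apply ex_RInt_Reals_0. apply exR, Kint_im_cont.
      * intros eps Heps. exists 0. intros Rr pr _. rewrite <- RInt_Reals.
        rewrite RInt_odd by (auto using Kint_im_cont, Kint_im_odd).
        rewrite Rminus_0_r, Rabs_R0. auto.
    + field. lra.
Qed.
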